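(* Let $m\ge2$, $q\ge2$ be integers, $\Omega$ a nonempty closed subset of $\Sigma_m$, $\overline{t}$ the unique vector in $[1,m^{1/(q-1)}]^{\mathrm{Pref}(\Omega)}$ with $t_u^q=\sum_{j:\,uj\in\mathrm{Pref}(\Omega)}t_{uj}$, $\mu$ the probability measure on $\Omega$ with $\mu[u]=\prod_{j=1}^k t_{u_1\cdots u_j}/t^q_{u_1\cdots u_{j-1}}$ for $u\in\mathrm{Pref}_k(\Omega)$, and $\mathbb{P}_\mu$ the corresponding measure on $X_\Omega$. For $x\in X_\Omega$ and $\ell\ge1$ put $$a_\ell(x):=\frac{-\log_m\mathbb{P}_\mu[x_1^{n}]}{n},\qquad n=q^\ell.$$ Then for every $x\in X_\Omega$, $$\lim_{\ell\to\infty}\frac{a_1(x)+\cdots+a_\ell(x)}{\ell}=(q-1)\log_m t_\varnothing,$$ and in particular $\liminf_{\ell\to\infty}a_\ell(x)\le(q-1)\log_m t_\varnothing$ for every $x\in X_\Omega$.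
   Context: $\Sigma_m=\{0,\dots,m-1\}^{\mathbb N}$; $[u]$ is the cylinder of sequences beginning with word $u$; $x_1^n=x_1\cdots x_n$. $\mathrm{Pref}_0(\Omega)=\{\varnothing\}$, $\mathrm{Pref}_k(\Omega)=\{u\in\{0,\dots,m-1\}^k:\ \Omega\cap[u]\ne\emptyset\}$, $\mathrm{Pref}(\Omega)=\bigcup_k\mathrm{Pref}_k(\Omega)$. $X_\Omega := \{x\in\Sigma_m:\ (x_{iq^\ell})_{\ell\ge0}\in\Omega \text{ for all } i\ge1,\ q\nmid i\}$. For $q\nmid i$, $J_i=\{q^ri\}_{r\ge0}$ and $u|J_i=u_iu_{qi}\cdots u_{q^ri}$ with $q^ri\le|u|<q^{r+1}i$; $\mathbb{P}_\mu[u]=\prod_{i\le|u|,\,q\nmid i}\mu[u|J_i]$. *)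

(* Defs.v *)
From Stdlib Require Import Reals Lra Lia Arith List ClassicalEpsilon.
Import ListNotations.
Open Scope R_scope.

(* Sequences in Sigma_m are functions x : nat -> nat, 0-based:
   the paper's x_i (i >= 1) is (x (i-1)). Words are lists of nat. *)
Definition in_Sigma (m : nat) (x : nat -> nat) : Prop := forall k, (x k < m)%nat.

(* Omega is a predicate on sequences. Closed in the product topology. *)
Definition closed_Sigma (m : nat) (Om : (nat -> nat) -> Prop) : Prop :=
  forall x, in_Sigma m x ->
    (forall k, exists w, Om w /\ forall j, (j < k)%nat -> w j = x j) -> Om x.

Definition Pref (Om : (nat -> nat) -> Prop) (u : list nat) : Prop :=
  exists w, Om w /\ forall j, (j < length u)%nat -> nth j u 0%nat = w j.

Definition Pind (P : Prop) : R :=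
  if excluded_middle_informative P then 1 else 0.

Definition Rsum_list (l : list R) : R := fold_right Rplus 0 l.
Definition Rprod_list (l : list R) : R := fold_right Rmult 1 l.

Definition logb (m : nat) (y : R) : R := ln y / ln (INR m).

Definition t_condition (m q : nat) (Om : (nat -> nat) -> Prop)
  (t : list nat -> R) : Prop :=
  forall u, Pref Om u ->
    1 <= t u <= Rpower (INR m) (/ (INR q - 1)) /\
    t u ^ q = Rsum_list (map (fun j => Pind (Pref Om (u ++ [j])) * t (u ++ [j]))
                              (seq 0 m)).

(* mu[u] = prod_{j=1}^k t_{u_1..u_j} / t_{u_1..u_{j-1}}^q for u in Pref_k(Omega),
   and mu[u] = 0 for u not in Pref(Omega) (cylinder not meeting Omega). *)
Definition mu_cyl (q : nat) (Om : (nat -> nat) -> Prop) (t : list nat -> R)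
  (u : list nat) : R :=
  Pind (Pref Om u) *
  Rprod_list (map (fun j => t (firstn j u) / t (firstn (j - 1) u) ^ q)
                  (seq 1 (length u))).

Definition X_Om (m q : nat) (Om : (nat -> nat) -> Prop) (x : nat -> nat) : Prop :=
  in_Sigma m x /\
  forall i, (1 <= i)%nat -> Nat.modulo i q <> 0%nat ->
    Om (fun l => x (i * q ^ l - 1)%nat).

(* (x_1^n)|J_i = x_i x_{qi} ... x_{q^r i}, q^r i <= n < q^(r+1) i.
   (For q >= 2, i >= 1 all exponents s with q^s i <= n satisfy s <= n.) *)
Definition restrJ (q : nat) (x : nat -> nat) (n i : nat) : list nat :=
  map (fun s => x (q ^ s * i - 1)%nat)
      (filter (fun s => Nat.leb (q ^ s * i) n) (seq 0 (S n))).

Definition Pmu_prefix (q : nat) (Om : (nat -> nat) -> Prop) (t : list nat -> R)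
  (x : nat -> nat) (n : nat) : R :=
  Rprod_list (map (fun i => mu_cyl q Om t (restrJ q x n i))
                  (filter (fun i => negb (Nat.eqb (Nat.modulo i q) 0)) (seq 1 n))).

Definition a_seq (m q : nat) (Om : (nat -> nat) -> Prop) (t : list nat -> R)
  (x : nat -> nat) (l : nat) : R :=
  - logb m (Pmu_prefix q Om t x (q ^ l)) / INR (q ^ l).

(* Main.v *)
Require Import Defs.
From Stdlib Require Import Reals List Arith Lia Lra Classical ClassicalEpsilon.
Import ListNotations.
Open Scope R_scope.

Lemma ln_le' : forall x y, 0 < x -> x <= y -> ln x <= ln y.
Proof. intros x y Hx Hxy. destruct (Rle_lt_or_eq_dec _ _ Hxy) as [H|H].
  left; now apply ln_increasing. subst; lra. Qed.

Lemma firstn_mapseq : forall (A:Type) (f:nat->A) j k, (j<=k)%nat ->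
  firstn j (map f (seq 0 k)) = map f (seq 0 j).
Proof. intros. rewrite firstn_map. f_equal. replace k with (j + (k-j))%nat by lia.
 rewrite seq_app, firstn_app.
 rewrite firstn_all2 by (rewrite length_seq; lia). rewrite length_seq, Nat.sub_diag. simpl.
 apply app_nil_r. Qed.

Lemma filter_all_true : forall (A:Type) (P:A->bool) l, (forall y, In y l -> P y = true) -> filter P l = l.
Proof. induction l; simpl; intros; auto. rewrite H by auto. f_equal; auto. Qed.

Lemma filter_all_false : forall (A:Type) (P:A->bool) l, (forall y, In y l -> P y = false) -> filter P l = [].
Proof. induction l; simpl; intros; auto. rewrite H by auto. auto. Qed.

Lemma prefix_char : forall (P : nat -> bool) N,
  (forall s s', (s' <= s)%nat -> P s = true -> P s' = true) ->
  exists k, (k <= N)%nat /\ forall s, (s < N)%nat -> (P s = true <-> (s < k)%nat).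
Proof. intros P N HP. induction N.
 - exists 0%nat. split; intros; lia.
 - destruct IHN as [k [Hk Hs]].
   destruct (Nat.eq_dec k N) as [E|E].
   + destruct (P N) eqn:PN.
     * exists (S N). split. lia. intros s Hs'. split; intros; try lia.
       apply (HP N); auto; lia.
     * exists k. split. lia. intros s Hs'. destruct (Nat.eq_dec s N).
       subst. rewrite PN. split; intros; [discriminate|lia]. apply Hs; lia.
   + exists k. split. lia. intros s Hs'. destruct (Nat.eq_dec s N).
     * subst s. split; intros H; [|lia]. exfalso.
       assert (P k = true) by (apply (HP N); auto; lia).
       apply Hs in H0; lia.
     * apply Hs; lia.
Qed.

Lemma filter_seq_prefix : forall (P : nat -> bool) N k, (k <= N)%nat ->
  (forall s, (s < N)%nat -> (P s = true <-> (s < k)%nat)) ->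
  filter P (seq 0 N) = seq 0 k.
Proof. intros P N k Hk H. replace N with (k + (N-k))%nat by lia.
  rewrite seq_app, filter_app. rewrite filter_all_true, filter_all_false.
  apply app_nil_r.
  - intros y Hy. apply in_seq in Hy. destruct (P y) eqn:E; auto. apply H in E; lia.
  - intros y Hy. apply in_seq in Hy. apply H; lia.
Qed.

Definition wseq (q : nat) (x : nat -> nat) (i s : nat) : nat := x (q ^ s * i - 1)%nat.

Lemma restrJ_char : forall q x n i, (2 <= q)%nat -> (1 <= i)%nat ->
  exists k, (forall s, (q ^ s * i <= n)%nat <-> (s < k)%nat) /\
            restrJ q x n i = map (wseq q x i) (seq 0 k).
Proof. intros q x n i Hq Hi.
  destruct (prefix_char (fun s => Nat.leb (q ^ s * i) n) (S n)) as [k [Hk Hs]].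
  { intros s s' Hle H. apply Nat.leb_le in H. apply Nat.leb_le.
    eapply Nat.le_trans; [|exact H]. apply Nat.mul_le_mono_r. apply Nat.pow_le_mono_r; lia. }
  assert (Hall : forall s, (q ^ s * i <= n)%nat <-> (s < k)%nat).
  { intros s. destruct (Nat.lt_ge_cases s (S n)).
    - rewrite <- Hs by auto. apply iff_sym, Nat.leb_le.
    - split; intros; try lia. exfalso. pose proof (Nat.pow_gt_lin_r q s ltac:(lia)). nia. }
  exists k. split; auto. unfold restrJ. rewrite (filter_seq_prefix _ _ k); auto.
Qed.

Definition K q x n i := length (restrJ q x n i).

Lemma K_char : forall q x n i, (2 <= q)%nat -> (1 <= i)%nat ->
  (forall s, (q ^ s * i <= n)%nat <-> (s < K q x n i)%nat) /\
  restrJ q x n i = map (wseq q x i) (seq 0 (K q x n i)).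
Proof. intros. destruct (restrJ_char q x n i H H0) as [k [H1 H2]].
  unfold K. rewrite H2, length_map, length_seq. auto. Qed.

Lemma char_unique : forall (P : nat -> Prop) k1 k2,
  (forall s, P s <-> (s < k1)%nat) -> (forall s, P s <-> (s < k2)%nat) -> k1 = k2.
Proof. intros. destruct (Nat.lt_trichotomy k1 k2) as [H1|[H1|H1]]; auto.
  - apply H0 in H1. apply H in H1. lia.
  - apply H in H1. apply H0 in H1. lia. Qed.

Lemma K_step : forall q x n i, (2 <= q)%nat -> (1 <= i <= n)%nat ->
  K q x (q * n) i = S (K q x n i).
Proof. intros q x n i Hq Hi.
  destruct (K_char q x (q*n) i Hq ltac:(lia)) as [A _].
  destruct (K_char q x n i Hq ltac:(lia)) as [B _].
  apply (char_unique (fun s => (q ^ s * i <= q * n)%nat)); auto.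
  intros [|s].
  - simpl. split; intros; nia.
  - rewrite Nat.pow_succ_r'. rewrite <- Nat.mul_assoc.
    rewrite <- Nat.mul_le_mono_pos_l by lia. rewrite B. lia.
Qed.

Lemma K_new : forall q x n i, (2 <= q)%nat -> (n < i <= q * n)%nat ->
  K q x (q * n) i = 1%nat.
Proof. intros q x n i Hq Hi.
  destruct (K_char q x (q*n) i Hq ltac:(lia)) as [A _].
  symmetry. apply (char_unique (fun s => (q ^ s * i <= q * n)%nat)); auto.
  intros [|s].
  - rewrite Nat.pow_0_r, Nat.mul_1_l. split; intros; lia.
  - split; intros; [|lia]. exfalso. rewrite Nat.pow_succ_r' in H.
    pose proof (Nat.pow_le_mono_r q 0 s ltac:(lia) ltac:(lia)). simpl in H0.
    remember (q ^ s)%nat as p. assert (q * 1 * i <= q * p * i)%nat by (apply Nat.mul_le_mono_r, Nat.mul_le_mono_l; lia). nia.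
Qed.

Fixpoint Ssum (f : nat -> R) (k : nat) : R :=
  match k with O => 0 | S k => Ssum f k + f k end.

Lemma exp_pow : forall a n, exp a ^ n = exp (INR n * a).
Proof. induction n. simpl. rewrite Rmult_0_l, exp_0; auto.
  rewrite S_INR. simpl. rewrite IHn, <- exp_plus. f_equal. lra. Qed.

Lemma Rprod_app : forall l1 l2, Rprod_list (l1 ++ l2) = Rprod_list l1 * Rprod_list l2.
Proof. induction l1; simpl; intros. lra. unfold Rprod_list in *. simpl. rewrite IHl1. lra. Qed.

Lemma Rsum_app : forall l1 l2, Rsum_list (l1 ++ l2) = Rsum_list l1 + Rsum_list l2.
Proof. induction l1; simpl; intros. unfold Rsum_list; simpl; lra.
  unfold Rsum_list in *. simpl. rewrite IHl1. lra. Qed.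

Lemma prod_telescope : forall (q : nat) (lam : nat -> R) k,
  Rprod_list (map (fun j => exp (lam j) / exp (lam (j-1)%nat) ^ q) (seq 1 k)) =
  exp (Ssum lam (S k) - lam 0%nat - INR q * Ssum lam k).
Proof. intros q lam k. induction k.
  - simpl. unfold Rprod_list; simpl. replace (0 + lam 0%nat - lam 0%nat - INR q * 0) with 0 by lra.
    now rewrite exp_0.
  - rewrite seq_S, map_app, Rprod_app, IHk. simpl map. idtac.
    unfold Rprod_list; simpl fold_right; rewrite Rmult_1_r.
    replace (1 + k - 1)%nat with k by lia. rewrite exp_pow.
    unfold Rdiv. rewrite <- exp_Ropp, <- !exp_plus. f_equal.
    replace (1+k)%nat with (S k) by lia. simpl Ssum. rewrite Nat.sub_0_r. lra.
Qed.

Lemma Rprod_exp : forall (A:Type) (h : A -> R) l,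
  Rprod_list (map (fun i => exp (h i)) l) = exp (Rsum_list (map h l)).
Proof. induction l; simpl. unfold Rprod_list, Rsum_list; simpl. now rewrite exp_0.
  unfold Rprod_list, Rsum_list in *; simpl. rewrite IHl, exp_plus. auto. Qed.

Definition II (q n : nat) : list nat :=
  filter (fun i => negb (Nat.eqb (Nat.modulo i q) 0)) (seq 1 n).

Definition NewL (q n : nat) : list nat :=
  filter (fun i => negb (Nat.eqb (Nat.modulo i q) 0)) (seq (1 + n) (q * n - n)).

Lemma II_split : forall q n, (1 <= q)%nat -> II q (q * n) = II q n ++ NewL q n.
Proof. intros. unfold II, NewL. rewrite <- filter_app, <- seq_app. f_equal. f_equal. nia. Qed.

Lemma In_II : forall q n i, In i (II q n) -> (1 <= i <= n)%nat /\ Nat.modulo i q <> 0%nat.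
Proof. intros q n i H. unfold II in H. apply filter_In in H. destruct H as [H1 H2].
  apply in_seq in H1. split. lia. intro E. rewrite E in H2. discriminate. Qed.

Lemma In_New : forall q n i, In i (NewL q n) -> (n < i <= q * n)%nat /\ Nat.modulo i q <> 0%nat.
Proof. intros q n i H. unfold NewL in H. apply filter_In in H. destruct H as [H1 H2].
  apply in_seq in H1. split. lia. intro E. rewrite E in H2. discriminate. Qed.

Lemma II_count : forall q n, (2 <= q)%nat -> length (II q (q * n)) = ((q - 1) * n)%nat.
Proof. intros q n Hq. induction n.
  - rewrite !Nat.mul_0_r. reflexivity.
  - unfold II in *. replace (q * S n)%nat with (q * n + q)%nat by lia.
    rewrite seq_app, filter_app, length_app, IHn.
    replace q with ((q - 1) + 1)%nat at 3 by lia.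
    rewrite seq_app, filter_app, length_app, filter_all_true.
    + rewrite length_seq. simpl.
      replace (S (q * n + (q - 1)))%nat with (0 + S n * q)%nat by nia.
      rewrite Nat.Div0.mod_add, Nat.Div0.mod_0_l. simpl. nia.
    + intros y Hy. apply in_seq in Hy.
      replace y with ((y - 1 - q * n + 1) + n * q)%nat by nia.
      rewrite Nat.Div0.mod_add, Nat.mod_small by lia.
      destruct (y - 1 - q * n + 1)%nat eqn:E; [lia|]. reflexivity.
Qed.

Definition lam (q : nat) (x : nat -> nat) (t : list nat -> R) (i j : nat) : R :=
  ln (t (map (wseq q x i) (seq 0 j))).

Lemma pref_word : forall m q Om x i j, X_Om m q Om x -> (1 <= i)%nat -> Nat.modulo i q <> 0%nat ->
  Pref Om (map (wseq q x i) (seq 0 j)).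
Proof. intros m q Om x i j [_ HX] Hi Hm. exists (fun l => x (i * q ^ l - 1)%nat). split.
  apply HX; auto. intros j' Hj'. rewrite length_map, length_seq in Hj'.
  rewrite nth_indep with (d' := wseq q x i 0%nat) by (rewrite length_map, length_seq; lia).
  rewrite map_nth, seq_nth by lia. unfold wseq. f_equal. f_equal. simpl. lia. Qed.

Lemma lam_bounds : forall m q Om x t i j, (2 <= m)%nat -> (2 <= q)%nat -> t_condition m q Om t ->
  X_Om m q Om x -> (1 <= i)%nat -> Nat.modulo i q <> 0%nat ->
  0 <= lam q x t i j <= / (INR q - 1) * ln (INR m) /\ 0 < t (map (wseq q x i) (seq 0 j)).
Proof. intros m q Om x t i j Hm Hq ht HX Hi Hmod.
  destruct (ht _ (pref_word m q Om x i j HX Hi Hmod)) as [[H1 H2] _].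
  unfold lam. split; [split|lra].
  - rewrite <- ln_1. apply ln_le'; lra.
  - rewrite <- ln_Rpower. apply ln_le'; lra.
Qed.

Lemma lam0 : forall q x t i, lam q x t i 0 = ln (t []).
Proof. reflexivity. Qed.

Lemma mu_word : forall m q Om x t i k, (2 <= m)%nat -> (2 <= q)%nat -> t_condition m q Om t ->
  X_Om m q Om x -> (1 <= i)%nat -> Nat.modulo i q <> 0%nat ->
  mu_cyl q Om t (map (wseq q x i) (seq 0 k)) =
  exp (Ssum (lam q x t i) (S k) - lam q x t i 0 - INR q * Ssum (lam q x t i) k).
Proof. intros m q Om x t i k Hm Hq ht HX Hi Hmod. unfold mu_cyl.
  unfold Defs.Pind. destruct (excluded_middle_informative (Pref Om (map (wseq q x i) (seq 0 k)))) as [_|C].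
  2:{ exfalso. apply C. eapply pref_word; eauto. }
  rewrite Rmult_1_l, length_map, length_seq. rewrite <- prod_telescope.
  f_equal. apply map_ext_in. intros j Hj. apply in_seq in Hj.
  rewrite !firstn_mapseq by lia.
  unfold lam. rewrite !exp_ln; auto; apply (proj2 (lam_bounds m q Om x t i _ Hm Hq ht HX Hi Hmod)).
Qed.

Definition Ef q x t n i :=
  Ssum (lam q x t i) (S (K q x n i)) - lam q x t i 0 - INR q * Ssum (lam q x t i) (K q x n i).

Lemma Pmu_exp : forall m q Om x t n, (2 <= m)%nat -> (2 <= q)%nat -> t_condition m q Om t ->
  X_Om m q Om x ->
  Pmu_prefix q Om t x n = exp (Rsum_list (map (Ef q x t n) (II q n))).
Proof. intros m q Om x t n Hm Hq ht HX. unfold Pmu_prefix. rewrite <- Rprod_exp.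
  f_equal. apply map_ext_in. intros i Hi. apply In_II in Hi. destruct Hi as [Hi Hmod].
  destruct (K_char q x n i Hq ltac:(lia)) as [_ E]. rewrite E.
  unfold Ef. apply (mu_word m q Om x t i _ Hm Hq ht HX); lia.
Qed.

Definition D q x t n := Rsum_list (map (fun i => Ssum (lam q x t i) (K q x n i)) (II q n)).

Lemma Rsum_const : forall (A:Type) (c:R) (l : list A), Rsum_list (map (fun _ => c) l) = INR (length l) * c.
Proof. induction l; simpl. unfold Rsum_list; simpl; lra. unfold Rsum_list in *; simpl. rewrite IHl. destruct (length l); simpl; lra. Qed.

Lemma Rsum_lin : forall (A:Type) (a b : A -> R) (c d : R) (l : list A),
  Rsum_list (map (fun i => a i + c * b i + d) l) = Rsum_list (map a l) + c * Rsum_list (map b l) + INR (length l) * d.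
Proof. induction l; simpl. unfold Rsum_list; simpl; lra. unfold Rsum_list in *; simpl. rewrite IHl. destruct (length l); simpl; lra. Qed.

Lemma D_rec : forall q x t n, (2 <= q)%nat ->
  D q x t (q * n) = D q x t n + Rsum_list (map (fun i => lam q x t i (K q x n i)) (II q n))
                    + INR (length (NewL q n)) * ln (t []).
Proof. intros q x t n Hq. unfold D. rewrite II_split by lia. rewrite map_app, Rsum_app.
  rewrite (map_ext_in _ (fun _ => ln (t [])) (NewL q n)).
  2:{ intros i Hi. apply In_New in Hi. destruct Hi as [Hi _]. rewrite K_new by lia. cbn [Ssum]. rewrite lam0. lra. }
  rewrite Rsum_const.
  rewrite (map_ext_in _ (fun i => Ssum (lam q x t i) (K q x n i) + 1 * lam q x t i (K q x n i) + 0) (II q n)).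
  2:{ intros i Hi. apply In_II in Hi. destruct Hi as [Hi _]. rewrite K_step by lia. simpl. lra. }
  rewrite Rsum_lin. lra.
Qed.

Lemma E_sum : forall q x t n, (2 <= q)%nat ->
  Rsum_list (map (Ef q x t n) (II q n)) =
  - (INR q * D q x t n - D q x t (q * n) + INR (length (II q (q * n))) * ln (t [])).
Proof. intros q x t n Hq. rewrite D_rec by auto. rewrite II_split, length_app, plus_INR by lia.
  unfold Ef, D.
  rewrite (map_ext_in _ (fun i => lam q x t i (K q x n i) + (1 - INR q) * Ssum (lam q x t i) (K q x n i) + - ln (t [])) (II q n)).
  2:{ intros i _. simpl. rewrite lam0. lra. }
  rewrite Rsum_lin. lra.
Qed.

Definition delta q x t l := D q x t (q ^ l) / INR (q ^ l).

Lemma lnm_pos : forall m, (2 <= m)%nat -> 0 < ln (INR m).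
Proof. intros. rewrite <- ln_1. apply ln_increasing. lra. apply lt_1_INR. lia. Qed.

Lemma qpow_pos : forall q l, (2 <= q)%nat -> 0 < INR (q ^ l).
Proof. intros. apply lt_0_INR. apply Nat.neq_0_lt_0, Nat.pow_nonzero. lia. Qed.

Lemma a_formula : forall m q Om x t l, (2 <= m)%nat -> (2 <= q)%nat -> t_condition m q Om t ->
  X_Om m q Om x ->
  a_seq m q Om t x l = (INR q * delta q x t l - INR q * delta q x t (S l)) / ln (INR m)
                       + (INR q - 1) * logb m (t []).
Proof. intros m q Om x t l Hm Hq ht HX. unfold a_seq, delta, logb.
  rewrite (Pmu_exp m q Om x t _ Hm Hq ht HX), ln_exp, E_sum, II_count by auto.
  assert (Hlm := lnm_pos m Hm). assert (Hn := qpow_pos q l Hq).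
  assert (Hq' : 2 <= INR q) by (apply (le_INR 2); lia).
  change (q ^ S l)%nat with (q * q ^ l)%nat.
  rewrite !mult_INR, minus_INR by lia. simpl INR at 3 4. 
  field. lra.
Qed.

Lemma Rsum_bound : forall (A:Type) (f : A -> R) (lo hi : R) l,
  (forall i, In i l -> lo <= f i <= hi) ->
  INR (length l) * lo <= Rsum_list (map f l) <= INR (length l) * hi.
Proof. induction l; intros H. simpl. unfold Rsum_list; simpl; lra.
  unfold Rsum_list in *. cbn [map length fold_right]. rewrite S_INR.
  assert (H1 := H a (or_introl eq_refl)).
  assert (H2 : forall i, In i l -> lo <= f i <= hi) by (intros; apply H; right; auto).
  specialize (IHl H2). lra. Qed.

Lemma Rsum_nonneg : forall (A:Type) (f : A -> R) l,
  (forall i, In i l -> 0 <= f i) -> 0 <= Rsum_list (map f l).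
Proof. induction l; intros H. simpl. unfold Rsum_list; simpl; lra.
  unfold Rsum_list in *. cbn [map fold_right].
  assert (H1 := H a (or_introl eq_refl)).
  assert (H2 : forall i, In i l -> 0 <= f i) by (intros; apply H; right; auto).
  specialize (IHl H2). lra. Qed.

Lemma Ssum_nonneg : forall f k, (forall j, 0 <= f j) -> 0 <= Ssum f k.
Proof. induction k; simpl; intros. lra. specialize (IHk H). specialize (H k). lra. Qed.

Definition Mb m q := / (INR q - 1) * ln (INR m).

Lemma D_nonneg : forall m q Om x t n, (2 <= m)%nat -> (2 <= q)%nat -> t_condition m q Om t ->
  X_Om m q Om x -> 0 <= D q x t n.
Proof. intros. unfold D. apply Rsum_nonneg.
  intros i Hi. apply In_II in Hi. destruct Hi as [Hi Hmod].
  apply Ssum_nonneg. intro j. apply (lam_bounds m q Om x t i j); auto; lia.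
Qed.

Lemma L_bound : forall m q Om x t, (2 <= m)%nat -> (2 <= q)%nat -> t_condition m q Om t ->
  X_Om m q Om x -> 0 <= ln (t []) <= Mb m q.
Proof. intros. rewrite <- (lam0 q x t 1). apply (lam_bounds m q Om x t 1 0); auto.
  rewrite Nat.mod_small by lia. lia. Qed.

Lemma D_step : forall m q Om x t n, (2 <= m)%nat -> (2 <= q)%nat -> t_condition m q Om t ->
  X_Om m q Om x -> D q x t (q * n) <= D q x t n + INR ((q - 1) * n) * Mb m q.
Proof. intros m q Om x t n Hm Hq ht HX. rewrite D_rec, <- II_count, II_split, length_app, plus_INR by lia.
  destruct (Rsum_bound _ (fun i => lam q x t i (K q x n i)) 0 (Mb m q) (II q n)) as [_ A].
  { intros i Hi. apply In_II in Hi. destruct Hi as [Hi Hmod].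
    apply (lam_bounds m q Om x t i _); auto; lia. }
  destruct (L_bound m q Om x t) as [_ B]; auto.
  assert (0 <= INR (length (NewL q n))) by apply pos_INR.
  nra.
Qed.

Lemma delta_bound : forall m q Om x t l, (2 <= m)%nat -> (2 <= q)%nat -> t_condition m q Om t ->
  X_Om m q Om x -> 0 <= delta q x t l <= D q x t 1 + 2 * Mb m q.
Proof. intros m q Om x t l Hm Hq ht HX.
  assert (HM : 0 <= Mb m q).
  { unfold Mb. assert (2 <= INR q) by (apply (le_INR 2); lia). assert (Hl := lnm_pos m Hm).
    apply Rmult_le_pos; [apply Rlt_le, Rinv_0_lt_compat; lra|lra]. }
  assert (HD1 := D_nonneg m q Om x t 1 Hm Hq ht HX).
  induction l.
  - unfold delta. simpl. rewrite Rdiv_1_r. split. auto. lra.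
  - assert (H0 : 0 <= delta q x t (S l)).
    { unfold delta. unfold Rdiv. apply Rmult_le_pos. apply (D_nonneg m q Om x t _ Hm Hq ht HX). apply Rlt_le, Rinv_0_lt_compat, qpow_pos; auto. }
    split; auto.
    assert (Hs := D_step m q Om x t (q ^ l) Hm Hq ht HX).
    assert (Hn := qpow_pos q l Hq). assert (Hq' : 2 <= INR q) by (apply (le_INR 2); lia).
    unfold delta in *. change (q ^ S l)%nat with (q * q ^ l)%nat.
    rewrite mult_INR, minus_INR in * by lia. simpl INR in Hs.
    set (n := INR (q ^ l)) in *. set (Q := INR q) in *.
    set (d := D q x t (q ^ l)) in *. set (d' := D q x t (q * q ^ l)) in *.
    assert (d <= n * (D q x t 1 + 2 * Mb m q)).
    { destruct IHl as [_ IH]. apply (Rmult_le_compat_l n) in IH; [|lra].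
      unfold Rdiv in IH. rewrite <- Rmult_assoc, (Rmult_comm n d), Rmult_assoc, Rinv_r, Rmult_1_r in IH; lra. }
    apply (Rmult_le_reg_r (Q * n)). nra.
    unfold Rdiv. rewrite Rmult_assoc, Rinv_l, Rmult_1_r by nra.
    assert (0 <= (Q - 1) * n * (D q x t 1 + Mb m q)) by (apply Rmult_le_pos; [apply Rmult_le_pos|]; lra). nra.
Qed.

Lemma sum_a : forall m q Om x t N, (2 <= m)%nat -> (2 <= q)%nat -> t_condition m q Om t ->
  X_Om m q Om x ->
  Rsum_list (map (a_seq m q Om t x) (seq 1 N)) =
  (INR q * delta q x t 1 - INR q * delta q x t (S N)) / ln (INR m) + INR N * ((INR q - 1) * logb m (t [])).
Proof. intros m q Om x t N Hm Hq ht HX. assert (Hl := lnm_pos m Hm). induction N.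
  - simpl. unfold Rsum_list; simpl. field. lra.
  - rewrite seq_S, map_app, Rsum_app, IHN. cbn [map]. unfold Rsum_list at 1. cbn [fold_right]. rewrite Rplus_0_r.
    rewrite (a_formula m q Om x t) by auto. replace (1 + N)%nat with (S N) by lia.
    rewrite S_INR. field. lra.
Qed.

Lemma tele_R : forall m q Om x t N' Rn eps, (2 <= m)%nat -> (2 <= q)%nat -> t_condition m q Om t ->
  X_Om m q Om x ->
  (forall l, (N' <= l < N' + Rn)%nat -> a_seq m q Om t x l > (INR q - 1) * logb m (t []) + eps) ->
  INR Rn * eps <= (INR q * delta q x t N' - INR q * delta q x t (N' + Rn)) / ln (INR m).
Proof. intros m q Om x t N' Rn eps Hm Hq ht HX. assert (Hl := lnm_pos m Hm). induction Rn; intros H.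
  - rewrite Nat.add_0_r. simpl. unfold Rdiv. lra.
  - assert (IH : INR Rn * eps <= (INR q * delta q x t N' - INR q * delta q x t (N' + Rn)) / ln (INR m))
      by (apply IHRn; intros; apply H; lia).
    assert (Ha := H (N' + Rn)%nat ltac:(lia)).
    rewrite (a_formula m q Om x t) in Ha by auto.
    rewrite S_INR. replace (N' + S Rn)%nat with (S (N' + Rn)) by lia.
    unfold Rdiv in *. lra.
Qed.

Theorem lemma5p2 (m q : nat) (Om : (nat -> nat) -> Prop) (t : list nat -> R)
  (hm : (2 <= m)%nat) (hq : (2 <= q)%nat)
  (hOmS : forall w, Om w -> in_Sigma m w)
  (hOmne : exists w, Om w)
  (hOmcl : closed_Sigma m Om)
  (ht : t_condition m q Om t) :
  forall x, X_Om m q Om x ->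
    Un_cv (fun l => Rsum_list (map (a_seq m q Om t x) (seq 1 l)) / INR l)
          ((INR q - 1) * logb m (t []))
    /\
    (forall eps, 0 < eps -> forall N : nat, exists l : nat,
        (N <= l)%nat /\ (1 <= l)%nat /\
        a_seq m q Om t x l <= (INR q - 1) * logb m (t []) + eps).
Proof.
  intros x HX.
  assert (Hl := lnm_pos m hm).
  assert (Hq' : 2 <= INR q) by (apply (le_INR 2); lia).
  set (Cb := D q x t 1 + 2 * Mb m q).
  assert (Hdb : forall l, 0 <= delta q x t l <= Cb)
    by (intro l; apply (delta_bound m q Om x t l hm hq ht HX)).
  assert (HX0 : 0 <= INR q * Cb / ln (INR m)).
  { destruct (Hdb 0%nat). unfold Rdiv. apply Rmult_le_pos; [nra|].
    apply Rlt_le, Rinv_0_lt_compat; auto. }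
  assert (Hdiff : forall a b, Rabs ((INR q * delta q x t a - INR q * delta q x t b) / ln (INR m))
                             <= INR q * Cb / ln (INR m)).
  { intros a b. apply Rabs_le. destruct (Hdb a), (Hdb b). unfold Rdiv.
    assert (0 < / ln (INR m)) by (apply Rinv_0_lt_compat; auto).
    split; [rewrite Ropp_mult_distr_l|]; apply Rmult_le_compat_r; nra. }
  split.
  - intros eps Heps. destruct (INR_archimed eps (INR q * Cb / ln (INR m)) Heps) as [N0 HN0].
    exists (S N0). intros n Hn. unfold R_dist. rewrite (sum_a m q Om x t) by auto.
    assert (Hnpos : 0 < INR n) by (apply lt_0_INR; lia).
    assert (INR N0 <= INR n) by (apply le_INR; lia).
    set (B := (INR q * delta q x t 1 - INR q * delta q x t (S n)) / ln (INR m)).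
    assert (HB := Hdiff 1%nat (S n)). fold B in HB.
    replace ((B + INR n * ((INR q - 1) * logb m (t []))) / INR n - (INR q - 1) * logb m (t []))
      with (B / INR n) by (field; lra).
    assert (HB' : Rabs B < INR n * eps) by nra.
    apply Rabs_def2 in HB'. apply Rabs_def1.
    + apply (Rmult_lt_reg_r (INR n)); auto. unfold Rdiv. rewrite Rmult_assoc, Rinv_l; lra.
    + apply (Rmult_lt_reg_r (INR n)); auto. unfold Rdiv. rewrite Rmult_assoc, Rinv_l; lra.
  - intros eps Heps N.
    destruct (classic (exists l, (N <= l)%nat /\ (1 <= l)%nat /\
        a_seq m q Om t x l <= (INR q - 1) * logb m (t []) + eps)) as [H|H]; auto.
    exfalso.
    set (N' := Nat.max N 1).
    assert (Hall : forall l, (N' <= l)%nat -> a_seq m q Om t x l > (INR q - 1) * logb m (t []) + eps).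
    { intros l Hl'. apply Rnot_le_lt. intro C. apply H. exists l. split; [lia|split;[lia|auto]]. }
    destruct (INR_archimed eps (INR q * Cb / ln (INR m)) Heps) as [R0 HR0].
    assert (T := tele_R m q Om x t N' R0 eps hm hq ht HX ltac:(intros; apply Hall; lia)).
    assert (HD := Hdiff N' (N' + R0)%nat). pose proof (Rle_abs ((INR q * delta q x t N' - INR q * delta q x t (N' + R0)) / ln (INR m))). lra.
Qed.
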